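(* Let $p\ge3$ be prime and $A,\chi,\gamma_k$ as in the context. For every $n\in[3,p-1]$, \[\chi\circ\gamma_{n-1}+\gamma_{n-1}\circ\chi=m_1(\gamma_n).\]
   Context: Let $p\ge3$ be prime, $l:=2(p-1)$; $\omega(i):=r+1$ if $i=jl+r$ with $0\le r\le p-2$, and $\omega(i):=l-r$ if $p-1\le r\le l-1$. Let $P_1,\dots,P_{p-1}$ and $e_k$ (identity of $P_k$), $e_{1,1},e_{p-1,p-1},e_{k+1,k}:P_k\to P_{k+1},e_{k,k+1}:P_{k+1}\to P_k$ be as follows: with $\Gamma=\prod_{\lambda\vdash p}\mathbb{Z}_{(p)}^{n_\lambda\times n_\lambda}$ ($n_\lambda$ = Specht module rank), hooks $\lambda^k=(p-k+1,1^{k-1})$, $n^k_{\rm b}=\binom{p-2}{k-1}$, $n^k_{\rm c}=\binom{p-2}{k-2}$, $\Lambda=\{\rho\in\Gamma:\rho^{\lambda^k}_{\rm bb}\equiv\rho^{\lambda^{k+1}}_{\rm cc}\bmod p,\ \rho^{\lambda^k}_{\rm bc}\equiv0\bmod p\}$ (blocks ${\rm cc}$ upper-left $n^k_{\rm c}\times n^k_{\rm c}$, ${\rm bc}$ upper-right, ${\rm bb}$ lower-right), $\mathbb{F}_p\mathfrak{S}_p$ identified with $\Lambda/p\Lambda$ via the known isomorphism $\mathbb{Z}_{(p)}\mathfrak{S}_p\cong\Lambda$, matrix units $\eta_{\lambda,i,j}$, $\tilde e_k=\eta_{\lambda^k,n^k_{\rm c}+1,n^k_{\rm c}+1}+\eta_{\lambda^{k+1},1,1}$,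 $P_k=\tilde e_k\Lambda/p\tilde e_k\Lambda$, maps induced by left multiplication with $p\eta_{\lambda^1,1,1}$, $p\eta_{\lambda^p,1,1}$, $\eta_{\lambda^{k+1},n^{k+1}_{\rm c}+1,1}$, $p\eta_{\lambda^{k+1},1,n^{k+1}_{\rm c}+1}$. Resolution $\mathcal P$: $\mathcal P_i=P_{\omega(i)}$ ($i\ge0$), $0$ ($i<0$), $d_i=e_{\omega(i-1),\omega(i)}$. $\operatorname{Hom}^z(C,C')=\prod_i\operatorname{Hom}(C_{i+z},C'_i)$, composition componentwise; $\lfloor g\rfloor^y_x$ ($g:C_x\to C'_y$) has $g$ as its $y$-th component, zero elsewhere. $A=\bigoplus_z\operatorname{Hom}^z_{\mathbb{F}_p\mathfrak{S}_p}(\mathcal P,\mathcal P)$, $m_1(g)=d\circ g-(-1)^zg\circ d$ for $g\in A^z$, $d=\sum_i\lfloor d_{i+1}\rfloor^i_{i+1}$. $\chi:=\sum_{i\ge0}(\lfloor e_1\rfloor^{il}_{il+l-1}+\sum_{k=1}^{p-2}\lfloor e_{k+1,k}\rfloor^{il+k}_{il+l-1+k}+\lfloor e_{p-1}\rfloor^{il+p-1}_{il+l-1+p-1}+\sum_{k=1}^{p-2}\lfloor e_{p-k-1,p-k}\rfloor^{il+p-1+k}_{il+l-1+p-1+k})$; $\gamma_k:=\sum_{i\ge0}(\lfloor e_k\rfloor^{k-1+li}_{k(l-1)+li}+\lfloor e_{p-k}\rfloor^{k-1+(p-1)+li}_{k(l-1)+(p-1)+li})$ for $k\in[2,p-1]$.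 *)

(* Defs.v *)
From HB Require Import structures.
From mathcomp Require Import all_boot all_order all_algebra.
Unset Printing Implicit Defensive.
Import Order.TTheory GRing.Theory Num.Theory.
Local Open Scope ring_scope.

Definition ell (p : nat) : nat := (2 * p.-1)%N.

Definition omega (p i : nat) : nat :=
  let r := (i %% ell p)%N in if (r <= p - 2)%N then r.+1 else (ell p - r)%N.

(* Gamma restricted to the hook components: component j : 'I_p is the
   lambda^{j+1} = (p-j, 1^j) component, of Specht rank C(p-1, j).
   Entries are rationals; Z_(p) is the subring of p-integral ones (see inLam). *)
Definition gam (p : nat) := forall j : 'I_p, 'M[rat]_('C(p.-1, j)).

Definition gzero p : gam p := fun j => 0.
Definition gadd p (x y : gam p) : gam p := fun j => x j + y j.
Definition gopp p (x : gam p) : gam p := fun j => - x j.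
Definition gscale p (c : rat) (x : gam p) : gam p := fun j => c *: x j.
Definition gmul p (x y : gam p) : gam p := fun j => x j *m y j.

Definition pint (p : nat) (x : rat) : bool := ~~ (p %| absz (denq x))%N.
Definition peq (p : nat) (a b : rat) : bool := pint p ((a - b) / p%:R).

(* n^k_c and n^k_b (k is 1-based) *)
Definition nc (p k : nat) : nat := if (k < 2)%N then 0%N else 'C(p - 2, k - 2).
Definition nb (p k : nat) : nat := 'C(p - 2, k.-1).

(* entry (a,b) (0-based) of the lambda^k component (k 1-based); 0 if out of range *)
Definition gent p (x : gam p) (k a b : nat) : rat :=
  if (0 < k)%N then
    match (insub k.-1 : option 'I_p) with
    | Some j =>
        match (insub a : option 'I_('C(p.-1, j))), (insub b : option 'I_('C(p.-1, j))) with
        | Some a', Some b' => x j a' b'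
        | _, _ => 0
        end
    | None => 0
    end
  else 0.

Definition inLam p (x : gam p) : Prop :=
  (forall j a b, pint p (x j a b)) /\
  forall k, (1 <= k <= p.-1)%N ->
    (forall a b, (a < nb p k)%N -> (b < nb p k)%N ->
       peq p (gent p x k (nc p k + a) (nc p k + b)) (gent p x k.+1 a b)) /\
    (forall a b, (a < nc p k)%N -> (b < nb p k)%N ->
       peq p (gent p x k a (nc p k + b)) 0).

(* matrix unit eta_{lambda^k, a, b} (1-based indices) *)
Definition eta p (k a b : nat) : gam p :=
  fun j => \matrix_(r, c)
    (if [&& (nat_of_ord j).+1 == k, (nat_of_ord r).+1 == a & (nat_of_ord c).+1 == b]
     then 1 else 0).

Definition etil p (k : nat) : gam p :=
  gadd p (eta p k (nc p k).+1 (nc p k).+1) (eta p k.+1 1 1).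

(* P_k = etil_k Lambda / p etil_k Lambda: x is a representative in etil_k Lambda *)
Definition inP p (k : nat) (x : gam p) : Prop :=
  exists rho, inLam p rho /\ x = gmul p (etil p k) rho.
(* x lies in p etil_k Lambda, i.e. represents 0 in P_k *)
Definition inpP p (k : nat) (x : gam p) : Prop :=
  exists rho, inLam p rho /\ x = gscale p p%:R (gmul p (etil p k) rho).

(* maps, acting on representatives *)
Definition map p := gam p -> gam p.
Definition mzero p : map p := fun _ => gzero p.
Definition lmul p (c : gam p) : map p := fun x => gmul p c x.
Definition eid p : map p := fun x => x.
Definition e11 p : map p := lmul p (gscale p p%:R (eta p 1 1 1)).
Definition epp p : map p := lmul p (gscale p p%:R (eta p p 1 1)).
Definition e_up p (k : nat) : map p := lmul p (eta p k.+1 (nc p k.+1).+1 1).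
Definition e_down p (k : nat) : map p := lmul p (gscale p p%:R (eta p k.+1 1 (nc p k.+1).+1)).

(* e_{a,b} : P_b -> P_a  (one of e_{k+1,k}, e_{k,k+1}, e_{1,1}, e_{p-1,p-1}) *)
Definition ehom p (a b : nat) : map p :=
  if a == b.+1 then e_up p b
  else if b == a.+1 then e_down p a
  else if (a == 1%N) && (b == 1%N) then e11 p
  else if (a == p.-1) && (b == p.-1) then epp p
  else mzero p.

(* A homogeneous element of Hom^z(P,P): component i : P_{omega(i+z)} -> P_{omega i}
   (all degrees used here are >= 0, and P_i = 0 for i < 0, so i ranges over nat). *)
Definition hom p := nat -> map p.

Definition hcomp p (z1 : nat) (f g : hom p) : hom p := fun i x => f i (g (i + z1) x).
Definition hadd p (f g : hom p) : hom p := fun i x => gadd p (f i x) (g i x).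

Definition dd p : hom p := fun i => ehom p (omega p i) (omega p i.+1).

Definition m1 p (z : nat) (g : hom p) : hom p :=
  fun i x => gadd p (hcomp p 1 (dd p) g i x)
                  (gopp p (gscale p ((-1) ^+ z) (hcomp p z g (dd p) i x))).

(* equality in Hom^z(P,P): componentwise equality of the induced maps on the quotients *)
Definition homEq p (z : nat) (f g : hom p) : Prop :=
  forall i x, inP p (omega p (i + z)) x ->
    inpP p (omega p i) (gadd p (f i x) (gopp p (g i x))).

(* chi: component at target index y (the unique bracket of the defining sum with
   target y), of degree l-1 *)
Definition chi p : hom p := fun y =>
  let r := (y %% ell p)%N in
  if r == 0%N then eid p
  else if (r < p.-1)%N then e_up p r
  else if r == p.-1 then eid p
  else e_down p (p - (r - p.-1)).-1.

Definition zchi p : nat := (ell p).-1.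

Definition gamma p (k : nat) : hom p := fun y =>
  let r := (y %% ell p)%N in
  if (r == k.-1) || (r == k.-1 + p.-1)%N then eid p else mzero p.

Definition zgam p (k : nat) : nat := (k * (ell p).-1 - k.-1)%N.

(* Main.v *)
Require Import Defs.
From HB Require Import structures.
From mathcomp Require Import all_boot all_order all_algebra.
From mathcomp Require Import zify.
From Stdlib Require Import FunctionalExtensionality.
Import GRing.Theory.

Lemma gzeroE p (j : 'I_p) (a b : 'I_('C(p.-1, j))) : gzero p j a b = 0%R.
Proof. by rewrite /gzero mxE. Qed.

Lemma pint0 p : prime p -> pint p 0%R.
Proof. move=> hp; rewrite /pint (_ : denq 0 = 1) /=; last by []. rewrite dvdn1; apply/eqP => h1; by move: hp; rewrite h1. Qed.

Lemma gent0 p k a b : gent p (gzero p) k a b = 0%R.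
Proof.
rewrite /gent; case: ifP => // _.
case: insub => // j; case: insub => // a'; case: insub => // b'; exact: gzeroE.
Qed.

Lemma inLam0 p : prime p -> inLam p (gzero p).
Proof.
move=> hp; split=> [j a b|k _]; first by rewrite gzeroE pint0.
by split=> a b _ _; rewrite !gent0 /peq subrr mul0r pint0.
Qed.
Lemma lmul0 p c : lmul p c (gzero p) = gzero p.
Proof. apply: functional_extensionality_dep => j; exact: mulmx0. Qed.
Lemma e_up0 p k : e_up p k (gzero p) = gzero p. Proof. exact: lmul0. Qed.
Lemma e_down0 p k : e_down p k (gzero p) = gzero p. Proof. exact: lmul0. Qed.
Lemma e110 p : e11 p (gzero p) = gzero p. Proof. exact: lmul0. Qed.
Lemma epp0 p : epp p (gzero p) = gzero p. Proof. exact: lmul0. Qed.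

Lemma resD L i c : (i + c) %% L = (i %% L + c %% L) %% L.
Proof. by rewrite modnDm. Qed.
Lemma modwrap L a : L <= a -> a < L + L -> a %% L = a - L.
Proof. move=> h1 h2. rewrite -{1}(subnKC h1) modnDl modn_small //. lia. Qed.

Lemma zchi_mod p : 3 <= p -> zchi p %% ell p = (ell p).-1.
Proof. move=> h; rewrite /zchi modn_small //; rewrite /ell; lia. Qed.
Lemma zgam_mod p k : 3 <= p -> 1 <= k -> 2 * k <= ell p -> zgam p k %% ell p = ell p - 2 * k + 1.
Proof.
move=> h hk hk2; rewrite /zgam.
have -> : (k * (ell p).-1 - k.-1 = (k-1) * ell p + (ell p - 2 * k + 1))%N.
  move: hk2; move: (ell p) => L hk2. nia.
rewrite modnMDl modn_small //; rewrite /ell in hk2 *; lia.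
Qed.
Lemma zgamS_mod p k : 3 <= p -> 2 <= k -> 2 * k <= ell p -> (zgam p k).+1 %% ell p = ell p - 2 * k + 2.
Proof.
move=> h hk hk2; rewrite /zgam.
have -> : ((k * (ell p).-1 - k.-1).+1 = (k-1) * ell p + (ell p - 2 * k + 2))%N.
  move: hk2; move: (ell p) => L hk2. nia.
rewrite modnMDl modn_small //; rewrite /ell in hk2 *; lia.
Qed.


Ltac wrapL L :=
  repeat match goal with |- context [(?a %% L)] =>
    let h := fresh "hw" in
    case: (ltnP a L) => h;
    [rewrite (@modn_small a L h) | rewrite (@modwrap L a h); last by lia];
    try (exfalso; lia)
  end.

Ltac splitifs :=
  repeat (case: ifP => ?; try (exfalso; lia)).

Ltac leaf := cbv delta [eid mzero] beta;
  rewrite ?e_up0 ?e_down0 ?e110 ?epp0 //; try (f_equal; lia).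

Lemma E1 p n (h3 : 3 <= p) (hn : 3 <= n <= p.-1) i x :
  chi p i (gamma p n.-1 (i + zchi p) x) = gamma p n i (dd p (i + zgam p n) x).
Proof.
have hL : ell p = (2 * p.-1)%N by [].
have L0 : 0 < ell p by rewrite hL; lia.
rewrite /gamma /chi /dd /omega /= -addnS !(resD _ i) zchi_mod // zgam_mod ?zgamS_mod //; try lia.
move: (ltn_pmod i L0); move: (i %% ell p) => r hr.
have [Hc|Hc] := boolP ((r == n.-1) || (r == n.-1 + p.-1)).
  case/orP: Hc => /eqP Hr; wrapL (ell p); splitifs; rewrite /ehom; splitifs; leaf.
cbv delta [mzero] beta.
wrapL (ell p); splitifs; leaf.
Qed.

Lemma E2 p n (h3 : 3 <= p) (hn : 3 <= n <= p.-1) i x :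
  gamma p n.-1 i (chi p (i + zgam p n.-1) x) = dd p i (gamma p n (i + 1) x).
Proof.
have hL : ell p = (2 * p.-1)%N by [].
have L0 : 0 < ell p by rewrite hL; lia.
rewrite /gamma /chi /dd /omega /= addn1 -[i.+1]addn1 !(resD _ i) zgam_mod //; try lia. have h1 : 1 %% ell p = 1 by rewrite modn_small //; lia. rewrite h1.
move: (ltn_pmod i L0); move: (i %% ell p) => r hr.
have [Hc|Hc] := boolP ((r == n.-1.-1) || (r == n.-1.-1 + p.-1)).
  case/orP: Hc => /eqP Hr; wrapL (ell p); splitifs; rewrite /ehom; splitifs; leaf.
cbv delta [mzero] beta.
wrapL (ell p); splitifs; rewrite /ehom; splitifs; leaf.
Qed.

Lemma zgam_odd p n : 3 <= p -> 3 <= n <= p.-1 -> odd (zgam p n).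
Proof.
move=> h3 hn.
have -> : zgam p n = (2 * ((n-1) * p.-1 + p.-1 - n)).+1.
  rewrite /zgam /ell; nia.
by rewrite /= oddM.
Qed.

Theorem mainTheorem8 (p : nat) (hp : prime p) (h3 : (3 <= p)%N)
  (n : nat) (hn : (3 <= n <= p.-1)%N) :
  homEq p (zchi p + zgam p n.-1)
    (hadd p (hcomp p (zchi p) (chi p) (gamma p n.-1))
          (hcomp p (zgam p n.-1) (gamma p n.-1) (chi p)))
    (m1 p (zgam p n) (gamma p n)).
Proof.
move=> i x _.
have Heq : hadd p (hcomp p (zchi p) (chi p) (gamma p n.-1))
          (hcomp p (zgam p n.-1) (gamma p n.-1) (chi p)) i x =
           m1 p (zgam p n) (gamma p n) i x.
  rewrite /hadd /hcomp /m1 E1 // E2 //.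
  apply: functional_extensionality_dep => j.
  rewrite /gadd /gopp /gscale -signr_odd zgam_odd // expr1 scaleN1r opprK.
  exact: GRing.addrC.
exists (gzero p); split; first exact: inLam0.
rewrite Heq; apply: functional_extensionality_dep => j.
by rewrite /gadd /gopp /gscale /gmul /gzero mulmx0 GRing.scaler0 GRing.subrr.
Qed.
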